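(* Let $n>1$, let $\mathbf{A}\in\mathbb{R}^{n\times n}$ be symmetric with $\mathbf{I}-\mathbf{A}$ invertible, $\mathbf{b}\in\mathbb{R}^n$, $\mathcal{FP}(\mathbf{x})=\mathbf{A}\mathbf{x}+\mathbf{b}$, and $\mathbf{x}^\star$ the unique fixed point of $\mathcal{FP}$. Let $\mathbf{v}_1,\mathbf{v}_2$ be two orthogonal eigenvectors of $\mathbf{A}$ with eigenvalues $\lambda_1,\lambda_2\ne0$, and let $\mathbf{x}^0$ satisfy $\mathbf{x}^0-\mathbf{x}^\star\in\mathrm{span}\{\mathbf{v}_1,\mathbf{v}_2\}$. Let $\{\mathbf{x}^i\}$ be the sequence generated by AA$^\star$(1) applied to $\mathcal{FP}$ from $\mathbf{x}^0$, and $\mathbf{e}^i=\mathbf{x}^i-\mathbf{x}^\star$. Then $$\|\mathbf{e}^{i+4}\|\le r(\lambda_1,\lambda_2)\|\mathbf{e}^i\|\quad\text{for } i=0,4,8,12,\dots,\qquad r(\lambda_1,\lambda_2)=\frac{\lambda_1^2\lambda_2^2(\lambda_2-\lambda_1)^2}{\big(|\lambda_1(\lambda_1-1)|+|\lambda_2(\lambda_2-1)|\big)^2}.$$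
   Context: Let $\Delta\mathcal{FP}(\mathbf{x})=\mathcal{FP}(\mathbf{x})-\mathbf{x}$ and $\|\cdot\|$ the Euclidean norm. The restarted Anderson acceleration AA$^\star$(1) is the iteration: for $i=0,2,4,\dots$, set $\mathbf{x}^{i+1}=\mathcal{FP}(\mathbf{x}^i)$; choose $\alpha^{(i+1)}\in\mathbb{R}$ minimizing $\|\Delta\mathcal{FP}(\mathbf{x}^{i+1})+\alpha^{(i+1)}(\Delta\mathcal{FP}(\mathbf{x}^i)-\Delta\mathcal{FP}(\mathbf{x}^{i+1}))\|$; set $\mathbf{x}^{i+2}=\mathcal{FP}(\mathbf{x}^{i+1})+\alpha^{(i+1)}(\mathcal{FP}(\mathbf{x}^i)-\mathcal{FP}(\mathbf{x}^{i+1}))$. *)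

(* Defs.v *)
From HB Require Import structures.
From mathcomp Require Import all_boot all_order all_algebra.
From mathcomp Require Import reals.
Set Implicit Arguments. Unset Strict Implicit. Unset Printing Implicit Defensive.
Import Order.TTheory GRing.Theory Num.Theory.
Local Open Scope ring_scope.

Definition vnorm (R : realType) (n : nat) (v : 'cV[R]_n) : R :=
  Num.sqrt (\sum_(i < n) (v i 0) ^+ 2).

Definition FP (R : realType) (n : nat) (A : 'M[R]_n) (b : 'cV[R]_n)
  (x : 'cV[R]_n) : 'cV[R]_n := A *m x + b.

Definition dFP (R : realType) (n : nat) (A : 'M[R]_n) (b : 'cV[R]_n)
  (x : 'cV[R]_n) : 'cV[R]_n := FP A b x - x.

Definition AAstar1_seq (R : realType) (n : nat) (A : 'M[R]_n) (b : 'cV[R]_n)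
  (x : nat -> 'cV[R]_n) : Prop :=
  forall k : nat,
    x (2 * k).+1 = FP A b (x (2 * k)) /\
    exists alpha : R,
      (forall beta : R,
         vnorm (dFP A b (x (2 * k).+1)
                + alpha *: (dFP A b (x (2 * k)) - dFP A b (x (2 * k).+1)))
         <= vnorm (dFP A b (x (2 * k).+1)
                + beta *: (dFP A b (x (2 * k)) - dFP A b (x (2 * k).+1)))) /\
      x (2 * k).+2 = FP A b (x (2 * k).+1)
                     + alpha *: (FP A b (x (2 * k)) - FP A b (x (2 * k).+1)).

Definition rate (R : realType) (l1 l2 : R) : R :=
  l1 ^+ 2 * l2 ^+ 2 * (l2 - l1) ^+ 2 /
  (`|l1 * (l1 - 1)| + `|l2 * (l2 - 1)|) ^+ 2.

(* Main.v *)
Require Import Defs.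
From HB Require Import structures.
From mathcomp Require Import all_boot all_order all_algebra.
From mathcomp Require Import reals.
From mathcomp Require Import ring lra zify.
Import Order.TTheory GRing.Theory Num.Theory.
Local Open Scope ring_scope.

Lemma step_sol (R : realType) (w1 w2 l1 l2 a : R) :
  w1*(l1-1)^+3*(l1-a*(l1-1)) + w2*(l2-1)^+3*(l2-a*(l2-1)) = 0 ->
  (w1*(l1-1)^+4 + w2*(l2-1)^+4) * (l1-a*(l1-1)) = w2*(l2-1)^+3*(l2-l1) /\
  (w1*(l1-1)^+4 + w2*(l2-1)^+4) * (l2-a*(l2-1)) = - (w1*(l1-1)^+3*(l2-l1)).
Proof.
move=> h; split; apply/eqP; rewrite -subr_eq0; apply/eqP.
  transitivity ((l1-1) * (w1*(l1-1)^+3*(l1-a*(l1-1)) + w2*(l2-1)^+3*(l2-a*(l2-1)))); first ring.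
  by rewrite h mulr0.
transitivity ((l2-1) * (w1*(l1-1)^+3*(l1-a*(l1-1)) + w2*(l2-1)^+3*(l2-a*(l2-1)))); first ring.
by rewrite h mulr0.
Qed.

Lemma sum_sq_eq0 (R : realType) (w1 w2 m1 m2 : R) : 0 <= w1 -> 0 <= w2 ->
  m1 != 0 -> m2 != 0 -> w1 * m1^+4 + w2 * m2^+4 = 0 -> w1 = 0 /\ w2 = 0.
Proof.
move=> h1 h2 hm1 hm2 hs.
have p1 : 0 < m1^+4 by rewrite exprn_even_gt0.
have p2 : 0 < m2^+4 by rewrite exprn_even_gt0.
have q1 : 0 <= w1 * m1^+4 by rewrite mulr_ge0 // ltW.
have q2 : 0 <= w2 * m2^+4 by rewrite mulr_ge0 // ltW.
have e1 : w1 * m1^+4 = 0 by lra.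
have e2 : w2 * m2^+4 = 0 by lra.
move/eqP: e1; rewrite mulf_eq0 (gt_eqF p1) orbF => /eqP ->.
move/eqP: e2; rewrite mulf_eq0 (gt_eqF p2) orbF => /eqP ->.
by [].
Qed.

Lemma cs_ineq (R : realType) (X Y l1 l2 m1 m2 : R) : 0 <= X -> 0 <= Y ->
  X * Y * (`|l1 * m1| + `|l2 * m2|) ^+ 2 <=
  (X * m1^+2 + Y * m2^+2) * (l2^+2 * X + l1^+2 * Y).
Proof.
move=> hX hY.
rewrite !normrM.
have k1 : l1^+2 = `|l1|^+2 by rewrite real_normK ?num_real.
have k2 : l2^+2 = `|l2|^+2 by rewrite real_normK ?num_real.
have k3 : m1^+2 = `|m1|^+2 by rewrite real_normK ?num_real.
have k4 : m2^+2 = `|m2|^+2 by rewrite real_normK ?num_real.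
rewrite k1 k2 k3 k4.
set A1 := `|l1|; set A2 := `|l2|; set M1 := `|m1|; set M2 := `|m2|.
have := sqr_ge0 (X * M1 * A2 - Y * M2 * A1).
move=> h. rewrite -subr_ge0.
have -> : (X * M1 ^+ 2 + Y * M2 ^+ 2) * (A2 ^+ 2 * X + A1 ^+ 2 * Y) -
  X * Y * (A1 * M1 + A2 * M2) ^+ 2 = (X * M1 * A2 - Y * M2 * A1)^+2 by ring.
exact h.
Qed.
Arguments step_sol {R w1 w2 l1 l2 a}.
Arguments sum_sq_eq0 {R w1 w2 m1 m2}.
Arguments cs_ineq {R X Y} l1 l2 m1 m2.

Lemma alg_main (R : realType) (N1 N2 l1 l2 c1 c2 a b : R) :
  0 < N1 -> 0 < N2 -> l1 != 0 -> l2 != 0 -> l1 != 1 -> l2 != 1 ->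
  N1  *  c1^+2  *  (l1-1)^+3  *  (l1 - a * (l1-1)) + N2  *  c2^+2  *  (l2-1)^+3  *  (l2 - a * (l2-1)) = 0 ->
  N1  *  (c1 * l1 * (l1 - a * (l1-1)))^+2  *  (l1-1)^+3  *  (l1 - b * (l1-1))
   + N2  *  (c2 * l2 * (l2 - a * (l2-1)))^+2  *  (l2-1)^+3  *  (l2 - b * (l2-1)) = 0 ->
  N1  *  (c1 * l1 * (l1 - a * (l1-1)) * l1 * (l1 - b * (l1-1)))^+2
   + N2  *  (c2 * l2 * (l2 - a * (l2-1)) * l2 * (l2 - b * (l2-1)))^+2
  <= (rate l1 l2)^+2  *  (N1  *  c1^+2 + N2  *  c2^+2).
Proof.
move=> hN1 hN2 hl1 hl2 h1 h2 E1 E2.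
have hm1 : l1 - 1 != 0 by rewrite subr_eq0.
have hm2 : l2 - 1 != 0 by rewrite subr_eq0.
have hW : 0 <= N1  *  c1^+2 + N2  *  c2^+2 by rewrite addr_ge0 // mulr_ge0 ?sqr_ge0 // ltW.
have hR : 0 <= (rate l1 l2)^+2  *  (N1  *  c1^+2 + N2  *  c2^+2) by rewrite mulr_ge0 ?sqr_ge0.
have [e1 e2] := step_sol E1.
have [e1' e2'] := step_sol E2.
set d1 := l1 - a * (l1-1) in e1 e2 e1' e2'  * .
set d2 := l2 - a * (l2-1) in e1 e2 e1' e2'  * .
set f1 := l1 - b * (l1-1) in e1' e2'  * .
set f2 := l2 - b * (l2-1) in e1' e2'  * .
set S := N1  *  c1 ^+ 2  *  (l1 - 1) ^+ 4 + N2  *  c2 ^+ 2  *  (l2 - 1) ^+ 4 in e1 e2.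
have [S0|Sn0] := eqVneq S 0.
  have [w1 w2] := sum_sq_eq0 (mulr_ge0 (ltW hN1) (sqr_ge0 c1)) (mulr_ge0 (ltW hN2) (sqr_ge0 c2)) hm1 hm2 S0.
  move/eqP: w1; rewrite mulf_eq0 (gt_eqF hN1) sqrf_eq0 /= => /eqP c10.
  move/eqP: w2; rewrite mulf_eq0 (gt_eqF hN2) sqrf_eq0 /= => /eqP c20.
  rewrite c10 c20.
  by rewrite !(mul0r, expr0n, mulr0, addr0) /=.
set S' := N1  *  (c1  *  l1  *  d1) ^+ 2  *  (l1 - 1) ^+ 4 + N2  *  (c2  *  l2  *  d2) ^+ 2  *  (l2 - 1) ^+ 4 in e1' e2'.
have [S0'|Sn0'] := eqVneq S' 0.
  have [w1 w2] := sum_sq_eq0 (mulr_ge0 (ltW hN1) (sqr_ge0 (c1  *  l1  *  d1))) (mulr_ge0 (ltW hN2) (sqr_ge0 (c2 * l2 * d2))) hm1 hm2 S0'.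
  move/eqP: w1; rewrite mulf_eq0 (gt_eqF hN1) sqrf_eq0 /= => /eqP c10.
  move/eqP: w2; rewrite mulf_eq0 (gt_eqF hN2) sqrf_eq0 /= => /eqP c20.
  rewrite c10 c20.
  by rewrite !(mul0r, expr0n, mulr0, addr0) /=.
have d1E : d1 = N2 * c2^+2 * (l2-1)^+3 * (l2-l1) / S by rewrite -e1 mulrC mulKf.
have d2E : d2 = - (N1 * c1^+2 * (l1-1)^+3 * (l2-l1)) / S by rewrite -e2 mulrC mulKf.
have f1E : f1 = N2 * (c2 * l2 * d2)^+2 * (l2-1)^+3 * (l2-l1) / S' by rewrite -e1' mulrC mulKf.
have f2E : f2 = - (N1 * (c1 * l1 * d1)^+2 * (l1-1)^+3 * (l2-l1)) / S' by rewrite -e2' mulrC mulKf.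
set X := N1 * c1^+2 * (l1-1)^+2.
set Y := N2 * c2^+2 * (l2-1)^+2.
have hX : 0 <= X by rewrite mulr_ge0 ?sqr_ge0 // mulr_ge0 ?sqr_ge0 // ltW.
have hY : 0 <= Y by rewrite mulr_ge0 ?sqr_ge0 // mulr_ge0 ?sqr_ge0 // ltW.
have SXY : S = X * (l1-1)^+2 + Y * (l2-1)^+2 by rewrite /S /X /Y; ring.
set T := l2^+2 * X + l1^+2 * Y.
have hT : 0 < T.
  have q1 : 0 < l1^+2 by rewrite exprn_even_gt0.
  have q2 : 0 < l2^+2 by rewrite exprn_even_gt0.
  have [X0|Xn0] := eqVneq X 0.
    have [Y0|Yn0] := eqVneq Y 0.
      by move: Sn0; rewrite SXY X0 Y0 !mul0r addr0 eqxx.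
    have : 0 < Y by rewrite lt_def Yn0 hY.
    rewrite /T X0 mulr0 add0r => hy. exact: mulr_gt0.
  have : 0 < X by rewrite lt_def Xn0 hX.
  move=> hx. rewrite /T. have := mulr_gt0 q2 hx; have := mulr_ge0 (ltW q1) hY; lra.
set ratio := (l2-l1)^+2 * l1^+2 * l2^+2 * X * Y / (S * T).
have key : N1 * (c1 * l1 * d1 * l1 * f1) ^+ 2 + N2 * (c2 * l2 * d2 * l2 * f2) ^+ 2
   = ratio^+2 * (N1 * c1 ^+ 2 + N2 * c2 ^+ 2).
  have Sn0'' := Sn0'.
  rewrite /S' d1E d2E in Sn0''.
  rewrite f1E f2E /S' d1E d2E /ratio /T /X /Y /S.
  field.
  apply/and3P; split.
  - by move: hT; rewrite /T /X /Y => /gt_eqF ->.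
  - exact: Sn0.
  - match goal with |- is_true (~~ (?E == _)) => have -> : E = S^+2 * S' end.
      rewrite /S' d1E d2E /S; field; exact: Sn0.
    by rewrite mulf_neq0 // expf_neq0.
rewrite key.
have hab0 : 0 < `|l1*(l1-1)| + `|l2*(l2-1)|.
  have := normr_ge0 (l2*(l2-1)).
  have : 0 < `|l1*(l1-1)| by rewrite normr_gt0 mulf_neq0.
  lra.
have hab : 0 < (`|l1*(l1-1)| + `|l2*(l2-1)|)^+2 by rewrite exprn_gt0.
have hS : 0 < S.
  rewrite lt_def Sn0 SXY /=.
  by rewrite addr_ge0 // mulr_ge0 // sqr_ge0.
have hST : 0 < S * T by rewrite mulr_gt0.
have cs := cs_ineq l1 l2 (l1-1) (l2-1) hX hY.
rewrite -SXY -/T in cs.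
have hq : X*Y/(S*T) <= 1/(`|l1*(l1-1)| + `|l2*(l2-1)|)^+2.
  rewrite ler_pdivrMr // mul1r (mulrC (_^-1)) ler_pdivlMr //.
have K0 : 0 <= l1^+2 * l2^+2 * (l2-l1)^+2 by apply: mulr_ge0; [apply: mulr_ge0|]; apply: sqr_ge0.
have ratioE : ratio = (l1^+2 * l2^+2 * (l2-l1)^+2) * (X*Y/(S*T)) by rewrite /ratio; ring.
have hrat : ratio <= rate l1 l2.
  rewrite ratioE.
  have -> : rate l1 l2 = (l1^+2 * l2^+2 * (l2-l1)^+2) * (1/(`|l1*(l1-1)| + `|l2*(l2-1)|)^+2) by rewrite /rate; ring.
  exact: ler_wpM2l.
have hr0 : 0 <= ratio.
  rewrite ratioE. apply: mulr_ge0 => //. apply: divr_ge0; [exact: mulr_ge0 | exact: ltW].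
apply: ler_wpM2r => //.
rewrite !expr2; apply: ler_pM => //.
Qed.
Arguments alg_main {R N1 N2 l1 l2 c1 c2 a b}.

Definition nsq (R : realType) (n : nat) (v : 'cV[R]_n) : R := \sum_(i < n) (v i 0) ^+ 2.

Arguments nsq {R n}.

Lemma nsq_comb (R : realType) (n : nat) (v1 v2 : 'cV[R]_n) (a1 a2 : R) :
  v1^T *m v2 = 0 ->
  nsq (a1 *: v1 + a2 *: v2) = nsq v1 * a1^+2 + nsq v2 * a2^+2.
Proof.
move=> horth.
have h0 : \sum_(i < n) v1 i 0 * v2 i 0 = 0.
  have e := congr1 (fun M : 'M[R]_1 => M 0 0) horth.
  rewrite /= !mxE in e.
  rewrite -[RHS]e; apply: eq_bigr => i _; by rewrite !mxE.
rewrite /nsq.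
transitivity (\sum_(i < n) ((v1 i 0 ^+ 2 * a1^+2 + v2 i 0 ^+2 * a2^+2) + (2 * a1 * a2) * (v1 i 0 * v2 i 0))).
  by apply: eq_bigr => i _; rewrite !mxE; ring.
by rewrite big_split /= -mulr_sumr h0 mulr0 addr0 big_split /= -!mulr_suml.
Qed.

Lemma nsq_gt0 (R : realType) (n : nat) (v : 'cV[R]_n) : v != 0 -> 0 < nsq v.
Proof.
move=> hv; rewrite lt_def; apply/andP; split; last by apply: sumr_ge0 => i _; exact: sqr_ge0.
apply/eqP => h; move/eqP: hv; apply; apply/matrixP => i j.
rewrite (ord1 j) mxE.
move: h; rewrite /nsq => /psumr_eq0P h0.
have := h0 (fun i _ => sqr_ge0 (v i 0)) i isT.
by move/eqP; rewrite sqrf_eq0 => /eqP.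
Qed.

Lemma eig_ne1 (R : realType) (n : nat) (A : 'M[R]_n) (v : 'cV[R]_n) (l : R) :
  (1%:M - A) \in unitmx -> v != 0 -> A *m v = l *: v -> l != 1.
Proof.
move=> hinv hv he; apply/eqP => hl; move/eqP: hv; apply.
have h : (1%:M - A) *m v = 0 by rewrite mulmxBl mul1mx he hl scale1r subrr.
by rewrite -(mul1mx v) -(mulVmx hinv) -mulmxA h mulmx0.
Qed.

Lemma quad_min (R : realType) (G H q : R) : 0 <= H ->
  (forall t, q <= q - 2 * t * G + t ^+ 2 * H) -> G = 0.
Proof.
move=> hH ht.
have hH1 : 0 < H + 1 by lra.
set u := (H + 1)^-1.
have hu : 0 < u by rewrite invr_gt0.
have hu1 : u * (H + 1) = 1 by rewrite mulVf // gt_eqF.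
have uH : u * H = 1 - u by move: hu1; rewrite mulrDr mulr1; lra.
have h := ht (G * u).
have E : (G*u)^+2*H = G^+2 * u * (u*H) by ring.
rewrite E uH in h.
have E2 : q - 2*(G*u)*G + G^+2*u*(1-u) = q - G^+2 * (u*(1+u)) by ring.
rewrite E2 in h.
have hp : 0 < u * (1 + u) by rewrite mulr_gt0 // addr_gt0.
have h3 : G^+2 * (u*(1+u)) <= 0 by lra.
rewrite pmulr_lle0 // in h3.
have : G^+2 = 0 by apply/eqP; rewrite eq_le h3 sqr_ge0.
by move/eqP; rewrite sqrf_eq0 => /eqP.
Qed.

Lemma nsq_ge0 (R : realType) (n : nat) (v : 'cV[R]_n) : 0 <= nsq v.
Proof. by apply: sumr_ge0 => i _; exact: sqr_ge0. Qed.

Lemma FP_comb (R : realType) (n : nat) (A : 'M[R]_n) (b xs v1 v2 : 'cV[R]_n) (l1 l2 a1 a2 : R) :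
  FP A b xs = xs -> A *m v1 = l1 *: v1 -> A *m v2 = l2 *: v2 ->
  FP A b (xs + (a1 *: v1 + a2 *: v2)) = xs + ((l1*a1) *: v1 + (l2*a2) *: v2).
Proof.
move=> hfix he1 he2.
rewrite /FP in hfix *.
rewrite mulmxDr addrAC hfix mulmxDr -!scalemxAr he1 he2.
by apply/matrixP => i j; rewrite !mxE; ring.
Qed.

Arguments FP_comb {R n A b xs v1 v2 l1 l2 a1 a2}.

Lemma AA_step (R : realType) (n : nat) (A : 'M[R]_n) (b xs v1 v2 : 'cV[R]_n) (l1 l2 : R)
  (x : nat -> 'cV[R]_n) :
  FP A b xs = xs -> A *m v1 = l1 *: v1 -> A *m v2 = l2 *: v2 -> v1^T *m v2 = 0 ->
  AAstar1_seq A b x -> forall (m : nat) (c1 c2 : R),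
  x (2 * m)%N = xs + (c1 *: v1 + c2 *: v2) ->
  exists al : R,
    x (2 * m).+2 = xs + ((c1* l1*(l1 - al*(l1-1))) *: v1 + (c2* l2*(l2 - al*(l2-1))) *: v2)
    /\ nsq v1 * c1^+2 * (l1-1)^+3 * (l1 - al*(l1-1))
       + nsq v2 * c2^+2 * (l2-1)^+3 * (l2 - al*(l2-1)) = 0.
Proof.
move=> hfix he1 he2 horth hAA m c1 c2 hx0.
have [hx1 [al [hmin hx2]]] := hAA m.
exists al.
have F0 : FP A b (x (2 * m)%N) = xs + ((l1*c1) *: v1 + (l2*c2) *: v2) by rewrite hx0 (FP_comb hfix he1 he2).
have X1 : x (2 * m).+1 = xs + ((l1*c1) *: v1 + (l2*c2) *: v2) by rewrite hx1 F0.
have F1 : FP A b (x (2 * m).+1) = xs + ((l1*(l1*c1)) *: v1 + (l2*(l2*c2)) *: v2) by rewrite X1 (FP_comb hfix he1 he2).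
split.
  by rewrite hx2 F1 F0; apply/matrixP => i j; rewrite !mxE; ring.
have RE : forall be : R, dFP A b (x (2 * m).+1) + be *: (dFP A b (x (2 * m)%N) - dFP A b (x (2 * m).+1))
   = ((l1-1)*c1*(l1 - be*(l1-1))) *: v1 + ((l2-1)*c2*(l2 - be*(l2-1))) *: v2.
  by move=> be; rewrite /dFP F0 F1 X1 hx0; apply/matrixP => i j; rewrite !mxE; ring.
have VN : forall v : 'cV[R]_n, vnorm v = Num.sqrt (nsq v) by [].
apply: (@quad_min _ _ (nsq v1 * c1^+2 * (l1-1)^+4 + nsq v2 * c2^+2 * (l2-1)^+4)).
  by apply: addr_ge0; (apply: mulr_ge0; [apply: mulr_ge0; [exact: nsq_ge0 | exact: sqr_ge0] | exact: exprn_even_ge0]).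
move=> t.
have := hmin (al + t).
rewrite !VN !RE !nsq_comb // ler_sqrt; last first.
  by apply: addr_ge0; apply: mulr_ge0; rewrite ?nsq_ge0 ?sqr_ge0.
move=> h; apply: le_trans h _.
rewrite le_eqVlt; apply/orP; left; apply/eqP; ring.
Qed.
Arguments nsq_gt0 {R n v}.
Arguments eig_ne1 {R n A v l}.
Arguments AA_step {R n A b xs v1 v2 l1 l2 x}.

Theorem lemma3 (R : realType) (n : nat) (hn : (1 < n)%N)
  (A : 'M[R]_n) (b : 'cV[R]_n)
  (hsym : A^T = A) (hinv : (1%:M - A) \in unitmx)
  (xs : 'cV[R]_n) (hfix : FP A b xs = xs)
  (v1 v2 : 'cV[R]_n) (l1 l2 : R)
  (hv1 : v1 != 0) (hv2 : v2 != 0)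
  (he1 : A *m v1 = l1 *: v1) (he2 : A *m v2 = l2 *: v2)
  (horth : v1^T *m v2 = 0)
  (hl1 : l1 != 0) (hl2 : l2 != 0)
  (x : nat -> 'cV[R]_n)
  (hx0 : exists c1 c2 : R, x 0%N - xs = c1 *: v1 + c2 *: v2)
  (hAA : AAstar1_seq A b x) :
  forall k : nat,
    vnorm (x (4 * k + 4)%N - xs) <= rate l1 l2 * vnorm (x (4 * k)%N - xs).
Proof.
have hN1 := nsq_gt0 hv1.
have hN2 := nsq_gt0 hv2.
have h1 := eig_ne1 hinv hv1 he1.
have h2 := eig_ne1 hinv hv2 he2.
have step := AA_step hfix he1 he2 horth hAA.
have inv : forall m, exists c1 c2 : R, x (2 * m)%N = xs + (c1 *: v1 + c2 *: v2).
  elim=> [|m [c1 [c2 hc]]].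
    have [c1 [c2 hc]] := hx0.
    by exists c1, c2; rewrite muln0 -hc addrC subrK.
  have [al [hx _]] := step m c1 c2 hc.
  exists (c1 * l1 * (l1 - al * (l1 - 1))), (c2 * l2 * (l2 - al * (l2 - 1))).
  by rewrite -hx mulnS.
move=> k.
have [c1 [c2 hc]] := inv (2 * k)%N.
have [al [hxa Ea]] := step _ _ _ hc.
have hc' : x (2 * (2 * k).+1)%N = xs + ((c1 * l1 * (l1 - al * (l1 - 1))) *: v1 + (c2 * l2 * (l2 - al * (l2 - 1))) *: v2).
  by rewrite mulnS; exact: hxa.
have [be [hxb Eb]] := step _ _ _ hc'.
have e4 : (4 * k = 2 * (2 * k))%N by rewrite mulnA.
have e44 : (4 * k + 4 = (2 * (2 * k).+1).+2)%N by rewrite mulnS mulnA; lia.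
rewrite e44 e4 hxb hc !(addrC xs) !addrK.
have VN : forall v : 'cV[R]_n, vnorm v = Num.sqrt (nsq v) by [].
rewrite !VN !nsq_comb //.
have := alg_main hN1 hN2 hl1 hl2 h1 h2 Ea Eb.
set Q := (X in X <= _).
move=> hQ.
have hr0 : 0 <= rate l1 l2.
  rewrite /rate; apply: divr_ge0; [apply: mulr_ge0; [apply: mulr_ge0|]; apply: sqr_ge0 | apply: sqr_ge0].
have W0 : 0 <= nsq v1 * c1 ^+ 2 + nsq v2 * c2 ^+ 2.
  by apply: addr_ge0; apply: mulr_ge0; rewrite ?nsq_ge0 ?sqr_ge0.
have : Num.sqrt Q <= Num.sqrt ((rate l1 l2)^+2 * (nsq v1 * c1 ^+ 2 + nsq v2 * c2 ^+ 2)).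
  by rewrite ler_sqrt // mulr_ge0 // sqr_ge0.
by rewrite sqrtrM ?sqr_ge0 // sqrtr_sqr ger0_norm.
Qed.
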